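(* Let $\mathbf L\in\mathbb R_+^{n\times k}$. Let $\mathbf p\in\operatorname{relint}(\Delta_n)$ and $c\in\mathbb R_+$ be such that $\mathbf p^\top\boldsymbol\ell_t=c$ for all $t\in[k]$. Then for every $t\in[k]$, \[ \mu_{\mathcal Q^{\mathbf L}_t}(\mathbf p)\le n-\operatorname{affdim}(\mathbf L). \]
   Context: Notation: $[m]=\{1,\dots,m\}$; $\Delta_n=\{\mathbf p\in\mathbb R_+^n:\sum_i p_i=1\}$, with relative interior the points having all entries strictly positive. A loss matrix $\mathbf L\in\mathbb R_+^{n\times k}$ has columns $\boldsymbol\ell_t$; $\operatorname{affdim}(\mathbf L)$ is the dimension of the affine hull of $\{\boldsymbol\ell_1,\dots,\boldsymbol\ell_k\}$. Trigger probability set: $\mathcal Q^{\mathbf L}_t=\{\mathbf p\in\Delta_n: t\in\operatorname{argmin}_{t'\in[k]}\mathbf p^\top\boldsymbol\ell_{t'}\}$. For a convex set $\mathcal Q\subseteq\mathbb R^n$ and $\mathbf p\in\mathcal Q$, $\mathcal F_{\mathcal Q}(\mathbf p)=\{\mathbf v:\exists\epsilon_0>0,\ \mathbf p+\epsilon\mathbf v\in\mathcal Q\ \forall\epsilon\in(0,\epsilon_0)\}$ and $\mu_{\mathcal Q}(\mathbf p)=\dim(\mathcal F_{\mathcal Q}(\mathbf p)\cap(-\mathcal F_{\mathcal Q}(\mathbf p)))$. *)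

(* Defs.v *)
(* Real numbers rendered as an arbitrary realFieldType R
   (the statement is purely order-algebraic / linear-algebraic). *)
From HB Require Import structures.
From mathcomp Require Import all_boot all_order all_algebra.
From Stdlib Require Import ClassicalEpsilon.
Set Implicit Arguments. Unset Strict Implicit. Unset Printing Implicit Defensive.
Import Order.TTheory GRing.Theory Num.Theory.
Local Open Scope ring_scope.

Section Defs.
Variables (R : realFieldType) (n k : nat).

Definition pbool (P : Prop) : bool :=
  if excluded_middle_informative P then true else false.

Definition dotcol (L : 'M[R]_(n, k)) (p : 'rV[R]_n) (t : 'I_k) : R :=
  \sum_(i < n) p 0 i * L i t.

Definition lcol (L : 'M[R]_(n, k)) (t : 'I_k) : 'rV[R]_n := (col t L)^T.

Definition in_simplex (p : 'rV[R]_n) : Prop :=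
  (forall i, 0 <= p 0 i) /\ \sum_(i < n) p 0 i = 1.

Definition in_relint_simplex (p : 'rV[R]_n) : Prop :=
  (forall i, 0 < p 0 i) /\ \sum_(i < n) p 0 i = 1.

Definition trigger_set (L : 'M[R]_(n, k)) (t : 'I_k) (q : 'rV[R]_n) : Prop :=
  in_simplex q /\ forall t' : 'I_k, dotcol L q t <= dotcol L q t'.

Definition feas_dir (Q : 'rV[R]_n -> Prop) (p v : 'rV[R]_n) : Prop :=
  exists eps0 : R, 0 < eps0 /\
    forall eps : R, 0 < eps -> eps < eps0 -> Q (p + eps *: v).

(* linear dimension of a set S of vectors of R^n: the maximal number of
   linearly independent vectors in S (= dim of span S; for a subspace, its
   dimension). *)
Definition has_indep (S : 'rV[R]_n -> Prop) (m : nat) : Prop :=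
  exists B : 'M[R]_(m, n), row_free B /\ forall i, S (row i B).

Definition lin_dim (S : 'rV[R]_n -> Prop) : nat :=
  \max_(m < n.+1 | pbool (has_indep S m)) (m : nat).

Definition mu (Q : 'rV[R]_n -> Prop) (p : 'rV[R]_n) : nat :=
  lin_dim (fun v => feas_dir Q p v /\ feas_dir Q p (- v)).

(* affdim(L): dimension of the affine hull of the columns l_1..l_k,
   i.e. dimension of its direction space span{l_t - l_s}.
   (For k = 0 this gives 0; irrelevant since the statement is then vacuous.) *)
Definition affdim (L : 'M[R]_(n, k)) : nat :=
  lin_dim (fun v => exists t s : 'I_k, v = lcol L t - lcol L s).

End Defs.

(* Main.v *)
Require Import Defs.
From HB Require Import structures.
From mathcomp Require Import all_boot all_order all_algebra.
From Stdlib Require Import ClassicalEpsilon.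
Import Order.TTheory GRing.Theory Num.Theory.
Local Open Scope ring_scope.

Lemma pboolP (P : Prop) : pbool P -> P.
Proof. by rewrite /pbool; case: excluded_middle_informative. Qed.

Lemma dotcol_lin (R : realFieldType) (n k : nat) (L : 'M[R]_(n, k)) p w e t :
  dotcol L (p + e *: w) t = dotcol L p t + e * dotcol L w t.
Proof.
rewrite /dotcol big_distrr -big_split /=; apply: eq_bigr => i _.
by rewrite !mxE mulrDl mulrA.
Qed.

Lemma dotcolN (R : realFieldType) (n k : nat) (L : 'M[R]_(n, k)) w t :
  dotcol L (- w) t = - dotcol L w t.
Proof.
rewrite /dotcol -sumrN; apply: eq_bigr => i _. by rewrite !mxE mulNr.
Qed.

Lemma feas_le (R : realFieldType) (n k : nat) (L : 'M[R]_(n, k)) p c t w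
  (hpc : forall t : 'I_k, dotcol L p t = c) :
  feas_dir (trigger_set L t) p w -> forall t', dotcol L w t <= dotcol L w t'.
Proof.
move=> [e0 [he0 H]] t'.
have [h1 h2] := midf_lt he0.
have [_ /(_ t')] := H _ h1 h2.
rewrite !dotcol_lin !hpc lerD2l.
by rewrite ler_pM2l.
Qed.

Theorem mainTheorem13 (R : realFieldType) (n k : nat) (L : 'M[R]_(n, k))
    (p : 'rV[R]_n) (c : R)
    (hL : forall i j, 0 <= L i j)
    (hp : in_relint_simplex p)
    (hc : 0 <= c)
    (hpc : forall t : 'I_k, dotcol L p t = c) :
  forall t : 'I_k, (mu (trigger_set L t) p <= n - affdim L)%N.
Proof.
move=> t.
apply/bigmax_leqP => m /pboolP [B [fB hB]].
suff H : (affdim L + m <= n)%N.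
  by rewrite leq_subRL // (leq_trans (leq_addr _ _) H).
rewrite addnC -leq_subRL; last by rewrite -ltnS.
apply/bigmax_leqP => d /pboolP [D [fD hD]].
rewrite leq_subRL; last by rewrite -ltnS.
move/eqP: fB => <-; move/eqP: fD => <-.
rewrite -(mxrank_tr D) addnC. have := (@mulmx0_rank_max _ _ _ _ B D^T). move=> HH; rewrite addnC; apply: HH.
apply/matrixP => i j; rewrite !mxE.
have [v1 v2] := hB i.
have e1 := @feas_le _ _ _ L p c t _ hpc v1; have e2 := @feas_le _ _ _ L p c t _ hpc v2.
have eq : forall t', dotcol L (row i B) t' = dotcol L (row i B) t.
  move=> t'; apply/eqP; rewrite eq_le e1 andbT.
  by have := e2 t'; rewrite !dotcolN lerN2.
have [t1 [s1 hD1]] := hD j.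
have : dotcol L (row i B) t1 - dotcol L (row i B) s1 = 0 by rewrite !eq subrr.
move=> H; apply: etrans H; rewrite /dotcol -sumrB; apply: eq_bigr => l _.
have := congr1 (fun M : 'rV[R]_n => M 0 l) hD1.
rewrite /= !mxE => ->; by rewrite mulrBr.
Qed.
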